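(* Let $A = (a_{ij}) \in \mathbb{R}^{p \times n}$, let $1 \leq k \leq p$, let $l, u \in \mathbb{R}^n$ with $l_j \leq u_j$ for all $j$, let $P \subseteq \{1, \ldots, p\}$ with $|P| \geq k$, and let $\beta \in [0,1]^n$. Then for all $x \in \mathbb{R}^n$ with $l_j \leq x_j \leq u_j$ for all $j$, $$Q_k(Ax) \geq \sum_{j=1}^n (1 - \beta_j)\left(\min_{i \in P} a_{ij}\right)(x_j - l_j) + \sum_{j=1}^n \beta_j \left(\max_{i \in P} a_{ij}\right)(x_j - u_j) + \min_{i \in P}\sum_{j=1}^n (1 - \beta_j) a_{ij} l_j + \min_{i \in P}\sum_{j=1}^n \beta_j a_{ij} u_j.$$
   Context: For $y \in \mathbb{R}^p$ and an integer $1 \leq k \leq p$, $Q_k(y)$ denotes the $k$-th largest entry of $y$ (entries counted with multiplicity). *)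

(* Defs.v *)
From HB Require Import structures.
From mathcomp Require Import all_boot all_order all_algebra.
Set Implicit Arguments. Unset Strict Implicit. Unset Printing Implicit Defensive.
Import Order.TTheory GRing.Theory Num.Theory.
Local Open Scope ring_scope.

Definition Qk (R : realDomainType) (p : nat) (k : nat) (y : 'cV[R]_p) : R :=
  nth 0 (sort (fun a b : R => b <= a) [seq y i 0 | i <- enum 'I_p]) k.-1.

Definition min_over (R : realDomainType) (p : nat) (P : {set 'I_p})
  (f : 'I_p -> R) : R :=
  head 0 (sort (fun a b : R => a <= b) [seq f i | i <- enum P]).

Definition max_over (R : realDomainType) (p : nat) (P : {set 'I_p})
  (f : 'I_p -> R) : R :=
  head 0 (sort (fun a b : R => b <= a) [seq f i | i <- enum P]).

(* Main.v *)
Require Import Defs.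
From HB Require Import structures.
From mathcomp Require Import all_boot all_order all_algebra.
From mathcomp Require Import ring lra zify.
Import Order.TTheory GRing.Theory Num.Theory.
Local Open Scope ring_scope.

Lemma cnt (R : realDomainType) p (y : 'I_p -> R) (c : R) :
  count (fun v => c <= v) [seq y i | i <- enum 'I_p] = #|[pred i | c <= y i]|.
Proof. by rewrite count_map -size_filter cardE enumT /enum_mem. Qed.

Lemma min_over_le (R : realDomainType) p (P : {set 'I_p}) (f : 'I_p -> R) i :
  i \in P -> min_over P f <= f i.
Proof.
move=> iP; rewrite /min_over.
have : f i \in sort (fun a b : R => a <= b) [seq f i | i <- enum P].
  by rewrite mem_sort; apply: map_f; rewrite mem_enum.
have : sorted (fun a b : R => a <= b) (sort (fun a b : R => a <= b) [seq f i | i <- enum P]).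
  by apply: sort_sorted => a b; apply: le_total.
case: (sort _ _) => [|a s] //= srt; rewrite inE => /orP [/eqP -> //|fs].
have := order_path_min (@le_trans _ R) srt.
by move/allP => /(_ _ fs).
Qed.

Lemma max_over_ge (R : realDomainType) p (P : {set 'I_p}) (f : 'I_p -> R) i :
  i \in P -> f i <= max_over P f.
Proof.
move=> iP; rewrite /max_over.
have : f i \in sort (fun a b : R => b <= a) [seq f i | i <- enum P].
  by rewrite mem_sort; apply: map_f; rewrite mem_enum.
have : sorted (fun a b : R => b <= a) (sort (fun a b : R => b <= a) [seq f i | i <- enum P]).
  by apply: sort_sorted => a b; apply: le_total.
have tr : transitive (fun a b : R => b <= a) by move=> a b d h1 h2; apply: le_trans h2 h1.
case: (sort _ _) => [|a s] //= srt; rewrite inE => /orP [/eqP -> //|fs].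
have := order_path_min tr srt.
by move/allP => /(_ _ fs).
Qed.

Lemma Qk_ge (R : realDomainType) p k (y : 'cV[R]_p) (P : {set 'I_p}) c :
  (1 <= k <= p)%N -> (k <= #|P|)%N -> (forall i, i \in P -> c <= y i 0) ->
  c <= Qk k y.
Proof.
move=> /andP [k1 kp] kP hP; rewrite /Qk.
set s := sort _ _.
have tr : transitive (fun a b : R => b <= a) by move=> a b d h1 h2; apply: le_trans h2 h1.
have srt : sorted (fun a b : R => b <= a) s.
  by apply: sort_sorted => a b; apply: le_total.
have ss : size s = p by rewrite size_sort size_map size_enum_ord.
rewrite leNgt; apply/negP => lt.
have cs : count (fun v => c <= v) s = #|[pred i | c <= y i 0]|.
  rewrite -(@cnt R p (fun i => y i 0) c); apply: (permP (_ : perm_eq _ _)).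
  by rewrite perm_sort perm_refl.
have : (k <= count (fun v : R => (c <= v)%R) s)%N.
  rewrite cs; apply: leq_trans kP _; apply: subset_leq_card.
  by apply/subsetP => i /hP; rewrite inE.
rewrite -(cat_take_drop k.-1 s) count_cat.
have -> : count (fun v : R => c <= v) (drop k.-1 s) = 0%N.
  apply/eqP; rewrite -leqn0 leqNgt -has_count; apply/hasPn => v.
  move=> /(nthP (0:R)) [j]; rewrite size_drop => jlt <-.
  rewrite nth_drop /=; apply/negP => cv.
  have : nth 0 s (k.-1 + j) <= nth 0 s k.-1.
    rewrite ss in jlt; apply: (sorted_leq_nth tr) => //; rewrite ?inE ?ss ?leq_addr //.
    + rewrite -subn_gt0; apply: leq_ltn_trans jlt; exact: leq0n.
    + by rewrite -ltn_subRL.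
  move=> h; have := le_lt_trans (le_trans cv h) lt; by rewrite ltxx.
rewrite addn0 => h.
have := leq_trans h (count_size _ _); rewrite size_take ss.
case: ifP => H; move: H k1 kp; lia.
Qed.

Theorem theorem9 (R : realFieldType) (p n k : nat) (A : 'M[R]_(p, n))
  (l u beta : 'cV[R]_n) (P : {set 'I_p}) :
  (1 <= k <= p)%N ->
  (forall j, l j 0 <= u j 0) ->
  (k <= #|P|)%N ->
  (forall j, 0 <= beta j 0 <= 1) ->
  forall x : 'cV[R]_n, (forall j, l j 0 <= x j 0 <= u j 0) ->
  Qk k (A *m x) >=
    \sum_(j < n) (1 - beta j 0) * min_over P (fun i => A i j) * (x j 0 - l j 0)
  + \sum_(j < n) beta j 0 * max_over P (fun i => A i j) * (x j 0 - u j 0)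
  + min_over P (fun i => \sum_(j < n) (1 - beta j 0) * A i j * l j 0)
  + min_over P (fun i => \sum_(j < n) beta j 0 * A i j * u j 0).
Proof.
move=> hk hlu hkP hb x hx.
apply: (@Qk_ge R p k (A *m x) P _ hk hkP) => i iP.
rewrite mxE.
apply: le_trans (_ : _ <= \sum_(j < n) (1 - beta j 0) * min_over P (fun i => A i j) * (x j 0 - l j 0)
  + \sum_(j < n) beta j 0 * max_over P (fun i => A i j) * (x j 0 - u j 0)
  + \sum_(j < n) (1 - beta j 0) * A i j * l j 0
  + \sum_(j < n) beta j 0 * A i j * u j 0) _.
  apply: lerD; first apply: lerD => //.
  - exact: (@min_over_le R p P (fun i => \sum_(j < n) (1 - beta j 0) * A i j * l j 0) i iP).
  - exact: (@min_over_le R p P (fun i => \sum_(j < n) beta j 0 * A i j * u j 0) i iP).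
rewrite -!big_split /=; apply: ler_sum => j _.
have m := @min_over_le R p P (fun i => A i j) i iP.
have M := @max_over_ge R p P (fun i => A i j) i iP.
move: m M (hb j) (hx j) => /= m M /andP [b0 b1] /andP [xl xu].
set mm := min_over _ _ in m *; set MM := max_over _ _ in M *.
have h1 : 0 <= (1 - beta j 0) * (A i j - mm) * (x j 0 - l j 0).
  by rewrite !mulr_ge0 // subr_ge0.
have h2 : 0 <= beta j 0 * (MM - A i j) * (u j 0 - x j 0).
  by rewrite !mulr_ge0 // subr_ge0.
rewrite -subr_ge0.
have -> : A i j * x j 0 - ((1 - beta j 0) * mm * (x j 0 - l j 0) + beta j 0 * MM * (x j 0 - u j 0) +
   (1 - beta j 0) * A i j * l j 0 + beta j 0 * A i j * u j 0)
   = (1 - beta j 0) * (A i j - mm) * (x j 0 - l j 0) + beta j 0 * (MM - A i j) * (u j 0 - x j 0).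
  by ring.
by rewrite addr_ge0.
Qed.
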